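(* Fix $\delta\in(0,1)$ and $\gamma'>0$. For all sufficiently large $n$ the following holds. Let $G=(X\cup Y,E)$ be a $d$-regular bipartite graph on $2n$ vertices with $d=\lfloor\delta n\rfloor$, let $t\le\log^4 n$, let $A\in\mathcal G(w,t)$, and let $(S,T)$ be a $\gamma'$-container for $A$. Then $|S|\le |T|$.
   Context: $N(S)$ is the neighbourhood of $S$; $d_S(v)$ is the number of neighbours of $v$ in $S$. A polymer is a subset of $X$ connected in the square $G^2$ of $G$. The closure of $A\subseteq X$ is $[A]:=\{x\in X: N(x)\subseteq N(A)\}$. $\mathcal G(w,t):=\{A\subseteq X \text{ polymer} : |N(A)|=w,\ |N(A)|-|[A]|=t\}$. For $A\subseteq X$ write $W=N(A)$ and $W_s=\{y\in W: d_A(y)\ge s\}$. A pair $(S,T)\in 2^X\times 2^Y$ is a $\gamma'$-container for $A$ (with $t=|N(A)|-|[A]|$) if (i) $S\supseteq[A]$ and $W_{d/2}\subseteq T\subseteq W$; (ii) $d_{Y\setminus T}(v)\le\gamma' t$ for every $v\in S$; (iii) $d_S(v)\le \gamma' t$ for every $v\in Y\setminus T$. *)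

(* Defs.v *)
From Stdlib Require Import Reals ZArith.
From mathcomp Require Import all_boot.

Set Implicit Arguments.
Unset Strict Implicit.
Unset Printing Implicit Defensive.

Section Graph.
Variables (X Y : finType) (adj : X -> Y -> bool).

Definition regular (d : nat) : Prop :=
  (forall x : X, #|[set y | adj x y]| = d) /\
  (forall y : Y, #|[set x | adj x y]| = d).

Definition nbh (A : {set X}) : {set Y} :=
  [set y | [exists x in A, adj x y]].

Definition degX (S : {set X}) (y : Y) : nat := #|[set x in S | adj x y]|.
Definition degY (U : {set Y}) (x : X) : nat := #|[set y in U | adj x y]|.

(* adjacency in G^2 between two vertices of X: they share a neighbour
   (X is independent in G, so this is distance <= 2 for distinct vertices) *)
Definition sqadj : rel X := fun x x' => [exists y, adj x y && adj x' y].

Definition polymer (A : {set X}) : Prop :=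
  A != set0 /\
  forall x x', x \in A -> x' \in A ->
    connect (fun u v => [&& u \in A, v \in A & sqadj u v]) x x'.

Definition closure (A : {set X}) : {set X} :=
  [set x | nbh [set x] \subset nbh A].

Definition tval (A : {set X}) : Z :=
  (Z.of_nat #|nbh A| - Z.of_nat #|closure A|)%Z.

Definition inG (w : nat) (t : Z) (A : {set X}) : Prop :=
  polymer A /\ #|nbh A| = w /\ tval A = t.

Definition Wset (A : {set X}) (s : R) : {set Y} :=
  [set y in nbh A | (if Rle_dec s (INR (degX A y)) then true else false)].

Definition container (d : nat) (gamma' : R) (A : {set X})
    (S : {set X}) (T : {set Y}) : Prop :=
  [/\ closure A \subset S,
      Wset A (Rdiv (INR d) (INR 2)) \subset T,
      T \subset nbh A,
      (forall v, v \in S -> Rle (INR (degY (~: T) v)) (Rmult gamma' (IZR (tval A))))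
    & (forall v, v \in ~: T -> Rle (INR (degX S v)) (Rmult gamma' (IZR (tval A))))].

End Graph.

(* Main.v *)
Require Import Defs.
From Stdlib Require Import Reals ZArith.
From Stdlib Require Import Lra Psatz.

Section AsymSec.
Local Open Scope R_scope.
Lemma exp_pow_n x n : exp x ^ n = exp (INR n * x).
Proof.
induction n as [|n IH]; simpl.
- rewrite Rmult_0_l, exp_0; reflexivity.
- rewrite IH, <- exp_plus. f_equal. destruct n; simpl; lra.
Qed.

Lemma asym (delta g : R) : 0 < delta -> 0 < g ->
  exists N : nat, forall n : nat, (N <= n)%nat ->
   g * (ln (INR n) ^ 4) * (ln (INR n) ^ 4 + 1) + 1 <= delta * INR n.
Proof.
intros Hd Hg.
set (c := 65536).
set (K := g * (c * c + c) + 1).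
set (B := (K / delta) ^ 2 + 1).
destruct (archimed B) as [HB _].
assert (HBpos : 0 < B) by (unfold B; nra).
assert (Hz : (0 < up B)%Z) by (apply lt_0_IZR; lra).
exists (Z.to_nat (up B)).
intros n Hn.
apply le_INR in Hn.
rewrite INR_IZR_INZ, Z2Nat.id in Hn by lia.
assert (Hn1 : B <= INR n) by lra.
assert (Hnpos : 0 < INR n) by lra.
set (L := ln (INR n)).
assert (HL : 0 <= L).
{ destruct (Rle_or_lt 0 L) as [h|h]; auto.
  exfalso. assert (exp L < exp 0) by (apply exp_increasing; lra).
  unfold L in H; rewrite exp_ln in H by lra. rewrite exp_0 in H.
  assert (1 <= B) by (unfold B; nra). lra. }
set (u := exp (L / 16)).
assert (Hu1 : 1 <= u) by (pose proof (exp_ineq1_le (L/16)); unfold u; lra).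
assert (HLu : L <= 16 * u) by (pose proof (exp_ineq1_le (L/16)); unfold u; lra).
assert (Hu16 : u ^ 16 = INR n).
{ unfold u. rewrite exp_pow_n. replace (INR 16 * (L / 16)) with L by (simpl; lra).
  unfold L; apply exp_ln; lra. }
set (v := u ^ 4).
assert (Hv1 : 1 <= v) by (unfold v; apply pow_R1_Rle; lra).
assert (HM : L ^ 4 <= c * v).
{ unfold v, c. replace 65536 with (16 ^ 4) by lra. rewrite <- Rpow_mult_distr.
  apply pow_incr; lra. }
assert (HM0 : 0 <= L ^ 4) by (apply pow_le; lra).
assert (Hn16 : INR n = (v * v) * (v * v)) by (rewrite <- Hu16; unfold v; ring).
assert (Hlhs : g * L ^ 4 * (L ^ 4 + 1) + 1 <= K * (v * v)).
{ unfold K.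
  assert (L ^ 4 * (L ^ 4 + 1) <= c * v * (c * v + 1)) by nra.
  assert (c * v * (c * v + 1) <= (c * c + c) * (v * v)) by (unfold c in *; nra).
  nra. }
assert (HKpos : 0 < K) by (unfold K, c; nra).
assert (Hvv : K / delta <= v * v).
{ destruct (Rle_or_lt (K/delta) (v*v)) as [h|h]; auto.
  exfalso. assert (0 <= v * v) by nra.
  assert ((v*v)*(v*v) < (K/delta)^2) by nra. unfold B in Hn1. lra. }
assert (K <= delta * (v * v)).
{ apply (Rmult_le_compat_l delta) in Hvv; [|lra].
  replace (delta * (K / delta)) with K in Hvv by (field; lra). exact Hvv. }
rewrite Hn16. nra.
Qed.
End AsymSec.

From mathcomp Require Import all_boot zify.
Set Implicit Arguments.
Unset Strict Implicit.
Unset Printing Implicit Defensive.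

Lemma card_sum (T : finType) (Q : {set T}) (p : pred T) :
  #|[set y in Q | p y]| = \sum_(y in Q) (p y : nat).
Proof.
rewrite -sum1_card (eq_bigl (fun y => (y \in Q) && p y)); last by move=> y; rewrite !inE.
rewrite big_mkcondr /=; apply: eq_bigr => y _; by case: (p y).
Qed.

Lemma degY_sum (X Y : finType) (adj : X -> Y -> bool) U x :
  degY adj U x = \sum_(y in U) (adj x y : nat).
Proof. exact: card_sum. Qed.

Lemma degX_sum (X Y : finType) (adj : X -> Y -> bool) P y :
  degX adj P y = \sum_(x in P) (adj x y : nat).
Proof. exact: card_sum. Qed.

Lemma exch (X Y : finType) (adj : X -> Y -> bool) (P : {set X}) (Q : {set Y}) :
  \sum_(x in P) degY adj Q x = \sum_(y in Q) degX adj P y.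
Proof.
under eq_bigr do rewrite degY_sum.
rewrite exchange_big /=; apply: eq_bigr => y _; by rewrite degX_sum.
Qed.

Lemma degY_split (X Y : finType) (adj : X -> Y -> bool) (U V : {set Y}) x :
  degY adj V x = degY adj (V :&: U) x + degY adj (V :\: U) x.
Proof. by rewrite !degY_sum (big_setID U). Qed.

Lemma degX_split (X Y : finType) (adj : X -> Y -> bool) (U V : {set X}) y :
  degX adj V y = degX adj (V :&: U) y + degX adj (V :\: U) y.
Proof. by rewrite !degX_sum (big_setID U). Qed.

Lemma degY_full (X Y : finType) (adj : X -> Y -> bool) d x :
  regular adj d -> degY adj [set: Y] x = d.
Proof.
case=> H _; rewrite -(H x) /degY; apply: eq_card => y; by rewrite !inE.
Qed.

Lemma degX_full (X Y : finType) (adj : X -> Y -> bool) d y :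
  regular adj d -> degX adj [set: X] y = d.
Proof.
case=> _ H; rewrite -(H y) /degX; apply: eq_card => x; by rewrite !inE.
Qed.

Lemma degY_compl (X Y : finType) (adj : X -> Y -> bool) d U x :
  regular adj d -> degY adj U x + degY adj (~: U) x = d.
Proof.
move=> R; rewrite -(degY_full x R) (degY_split _ U [set: Y]) setTI setTD //.
Qed.

Lemma degX_compl (X Y : finType) (adj : X -> Y -> bool) d U y :
  regular adj d -> degX adj U y + degX adj (~: U) y = d.
Proof.
move=> R; rewrite -(degX_full y R) (degX_split _ U [set: X]) setTI setTD //.
Qed.

Lemma degX_mono (X Y : finType) (adj : X -> Y -> bool) (P P' : {set X}) y :
  P \subset P' -> degX adj P y <= degX adj P' y.
Proof.
move=> sub; apply: subset_leq_card; apply/subsetP => x; rewrite !inE.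
case/andP=> xP ->; by rewrite (subsetP sub x xP).
Qed.

Lemma comb (X Y : finType) (adj : X -> Y -> bool) (d K : nat) (A S : {set X}) (T : {set Y}) :
  regular adj d ->
  Defs.closure adj A \subset S -> T \subset nbh adj A ->
  (forall v, v \in S -> degY adj (~: T) v <= K) ->
  (forall v, v \in ~: T -> degX adj S v <= K) ->
  (#|S :\: Defs.closure adj A| + #|nbh adj A :\: T|) * (d - K)
    <= d * #|nbh adj A| - d * #|Defs.closure adj A|.
Proof.
move=> R sCS sTN HS HT.
set C := Defs.closure adj A; set Nb := nbh adj A.
have E1 : \sum_(x in [set: X]) degY adj Nb x = #|Nb| * d.
  by rewrite exch -sum_nat_const; apply: eq_bigr => y _; exact: degX_full.
have E2 : \sum_(x in C) degY adj Nb x = #|C| * d.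
  rewrite -sum_nat_const; apply: eq_bigr => x xC.
  rewrite -(degY_compl Nb x R).
  suff -> : degY adj (~: Nb) x = 0 by rewrite addn0.
  apply/eqP; rewrite cards_eq0; apply/eqP/setP => y; rewrite !inE.
  apply/negbTE/negP => /andP[yN axy].
  move: xC; rewrite /C /Defs.closure inE => /subsetP /(_ y) H.
  have yN' : y \in nbh adj A.
    apply: H; rewrite inE; apply/existsP; exists x; by rewrite inE eqxx axy.
  by move: yN'; rewrite inE (negbTE yN).
have E3 : \sum_(x in ~: C) degY adj Nb x + d * #|C| = d * #|Nb|.
  rewrite [d * #|Nb|]mulnC -E1 (big_setID (A:=[set: X]) C) setTI setTD E2.
  by rewrite addnC mulnC.
have E4 : \sum_(x in ~: C) degY adj Nb x =
   \sum_(x in ~: C) degY adj T x + \sum_(y in Nb :\: T) degX adj (~: C) y.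
  rewrite -exch -big_split /=; apply: eq_bigr => x _.
  by rewrite (degY_split _ T) (setIidPr sTN).
have L1 : #|S :\: C| * (d - K) <= \sum_(x in ~: C) degY adj T x.
  rewrite (big_setID S) /= -sum_nat_const.
  have -> : ~: C :&: S = S :\: C by rewrite setIC setDE.
  apply: leq_trans (leq_addr _ _).
  apply: leq_sum => x; rewrite inE => /andP[_ xS].
  have := degY_compl T x R; have := HS x xS; lia.
have L2 : #|Nb :\: T| * (d - K) <= \sum_(y in Nb :\: T) degX adj (~: C) y.
  rewrite -sum_nat_const; apply: leq_sum => y; rewrite inE => /andP[yT _].
  have := degX_compl C y R; have := degX_mono adj y sCS.
  have := HT y; rewrite inE yT => /(_ isT); rewrite -/C; lia.
rewrite mulnDl; move: E3 E4 L1 L2; lia.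
Qed.

Theorem mainTheorem12 (delta gamma' : R) :
  Rlt R0 delta -> Rlt delta R1 -> Rlt R0 gamma' ->
  exists N : nat, forall n : nat, (N <= n)%N ->
  forall (X Y : finType) (adj : X -> Y -> bool) (d : nat),
    #|X| + #|Y| = 2 * n ->
    regular adj d ->
    Rle (INR d) (Rmult delta (INR n)) ->
    Rlt (Rmult delta (INR n)) (Rplus (INR d) R1) ->
  forall (w : nat) (t : Z) (A : {set X}) (S : {set X}) (T : {set Y}),
    Rle (IZR t) (pow (ln (INR n)) 4) ->
    inG adj w t A ->
    container adj d gamma' A S T ->
    #|S| <= #|T|.
Proof.
move=> Hd0 Hd1 Hg.
have [N HN] := @asym delta gamma' Hd0 Hg.
exists N => n Hn X Y adj d Hcard R Hdle Hdlt w t A S T Ht [_ [_ Htv]] [HC HW HTN HSb HTb].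
have key := HN n (elimT leP Hn).
rewrite Htv in HSb HTb.
case: (set_0Vmem S) => [-> | [v vS]]; first by rewrite cards0.
have t0 : Rle 0 (IZR t).
  have := HSb v vS; have := pos_INR (degY adj (~: T) v); nra.
set K := maxn (\max_(u in S) degY adj (~: T) u) (\max_(y in ~: T) degX adj S y).
have KS : forall u, u \in S -> degY adj (~: T) u <= K.
  move=> u uS; exact: leq_trans (leq_bigmax_cond _ uS) (leq_maxl _ _).
have KT : forall y, y \in ~: T -> degX adj S y <= K.
  move=> y yT; exact: leq_trans (leq_bigmax_cond _ yT) (leq_maxr _ _).
have Kmax : forall a b : nat, Rle (INR a) (gamma' * IZR t) -> Rle (INR b) (gamma' * IZR t) ->
    Rle (INR (maxn a b)) (gamma' * IZR t).
  by move=> a b Ha Hb; rewrite /maxn; case: ifP.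
have KR : Rle (INR K) (gamma' * IZR t).
  apply Kmax.
  - apply: (big_ind (fun m => Rle (INR m) (gamma' * IZR t)));
      [simpl; nra | exact: Kmax | move=> i iS; exact: HSb].
  - apply: (big_ind (fun m => Rle (INR m) (gamma' * IZR t)));
      [simpl; nra | exact: Kmax | move=> i iT; exact: HTb].
have Hc := comb R HC HTN KS KT.
set C := Defs.closure adj A in Hc HC.
set Nb := nbh adj A in Hc HTN.
have hS : #|S| = #|C| + #|S :\: C|.
  by rewrite -(cardsID C S) (setIidPr HC).
have hT : #|T| + #|Nb :\: T| = #|Nb|.
  by rewrite -(cardsID T Nb) (setIidPr HTN).
have tZ : IZR t = Rminus (INR #|Nb|) (INR #|C|).
  by rewrite -Htv /tval minus_IZR -!INR_IZR_INZ.
have cle : (#|C| <= #|Nb|)%coq_nat.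
  apply: INR_le; lra.
rewrite leqNgt; apply/negP => lt.
have nat1 : (d <= K * (#|Nb| - #|C| + 1))%coq_nat by nia.
have r1 : Rle (INR d) (INR K * (IZR t + 1)).
  rewrite tZ -minus_INR // -(INR_IZR_INZ 1) -plus_INR -mult_INR.
  exact: le_INR.
set M := pow (ln (INR n)) 4 in key Ht.
clearbody M.
have r2 : Rle (INR K * (IZR t + 1)) (gamma' * IZR t * (IZR t + 1)) by nra.
have r3a : Rle (IZR t * (IZR t + 1)) (M * (M + 1)).
  apply: Rmult_le_compat; lra.
have r3 : Rle (gamma' * IZR t * (IZR t + 1)) (gamma' * M * (M + 1)).
  have := Rmult_le_compat_l gamma' _ _ (Rlt_le _ _ Hg) r3a; rewrite !Rmult_assoc; lra.
lra.
Qed.
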